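(* Let $F_1,F_2$ be two real quadratic forms on $\mathbf{R}^n$ such that $\alpha F_1+\beta F_2$ is strictly hyperbolic for every $(\alpha,\beta)\in\mathbf{R}^2\setminus\{0\}$. Then there exist $C>0$ and a positive quadratic form $Q\in K_C$ with $\mathrm{Tr}(F_1Q)=\mathrm{Tr}(F_2Q)=0$.
   Context: Quadratic forms are identified with real symmetric $n\times n$ matrices. A symmetric matrix $A$ with largest eigenvalue $\lambda_{\max}(A)$ and smallest eigenvalue $\lambda_{\min}(A)$ is strictly hyperbolic if $1/M<-\lambda_{\max}(A)/\lambda_{\min}(A)<M$ for some $M>0$ (in particular $\lambda_{\max}>0>\lambda_{\min}$). For $C>0$, $K_C$ is the set of symmetric matrices $(a_{ij})$ with $C^{-1}|\xi|^2\le\sum a_{ij}\xi_i\xi_j\le C|\xi|^2$ for all $\xi\in\mathbf{R}^n$. *)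

(* Defs.v *)
From HB Require Import structures.
From mathcomp Require Import all_boot all_order all_algebra.
From mathcomp Require Import reals.
Set Implicit Arguments. Unset Strict Implicit. Unset Printing Implicit Defensive.
Import Order.TTheory GRing.Theory Num.Theory.
Local Open Scope ring_scope.

(* Quadratic forms on R^n are identified with symmetric n x n matrices. *)
Definition sym_mx {R : realType} {n : nat} (A : 'M[R]_n) : Prop := A^T = A.

Definition is_lambda_max {R : realType} {n : nat} (A : 'M[R]_n) (l : R) : Prop :=
  eigenvalue A l /\ forall a, eigenvalue A a -> a <= l.

Definition is_lambda_min {R : realType} {n : nat} (A : 'M[R]_n) (l : R) : Prop :=
  eigenvalue A l /\ forall a, eigenvalue A a -> l <= a.

Definition strictly_hyperbolic {R : realType} {n : nat} (A : 'M[R]_n) : Prop :=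
  exists lmax lmin, is_lambda_max A lmax /\ is_lambda_min A lmin /\
    exists M : R, 0 < M /\ M^-1 < - lmax / lmin /\ - lmax / lmin < M.

Definition qform {R : realType} {n : nat} (A : 'M[R]_n) (xi : 'cV[R]_n) : R :=
  (xi^T *m A *m xi) ord0 ord0.

Definition sqnorm {R : realType} {n : nat} (xi : 'cV[R]_n) : R :=
  \sum_(i < n) xi i ord0 ^+ 2.

Definition in_K {R : realType} {n : nat} (C : R) (A : 'M[R]_n) : Prop :=
  sym_mx A /\
  forall xi : 'cV[R]_n, C^-1 * sqnorm xi <= qform A xi /\ qform A xi <= C * sqnorm xi.

(* Main.v *)
Require Import Defs.
From HB Require Import structures.
From mathcomp Require Import all_boot all_order all_algebra.
From mathcomp Require Import classical_sets boolp reals.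
From mathcomp Require Import ring lra.
Import Order.TTheory GRing.Theory Num.Theory.
Local Open Scope ring_scope.
Local Open Scope classical_set_scope.
Set Implicit Arguments. Unset Strict Implicit.

Section Cone.
Variable R : realType.

Lemma line_hit (w1 w2 q1 q2 : R) :
  w1 * q2 - w2 * q1 = 0 -> w1 * q1 + w2 * q2 != 0 ->
  (w1^+2 + w2^+2) / (w1 * q1 + w2 * q2) * q1 = w1 /\
  (w1^+2 + w2^+2) / (w1 * q1 + w2 * q2) * q2 = w2.
Proof.
move=> hc hd.
have e1 : (w1^+2 + w2^+2) * q1 = w1 * (w1 * q1 + w2 * q2).
  have : (w1^+2 + w2^+2) * q1 - w1 * (w1 * q1 + w2 * q2) = - w2 * (w1 * q2 - w2 * q1) by ring.
  by rewrite hc mulr0 => /eqP; rewrite subr_eq0 => /eqP.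
have e2 : (w1^+2 + w2^+2) * q2 = w2 * (w1 * q1 + w2 * q2).
  have : (w1^+2 + w2^+2) * q2 - w2 * (w1 * q1 + w2 * q2) = w1 * (w1 * q2 - w2 * q1) by ring.
  by rewrite hc mulr0 => /eqP; rewrite subr_eq0 => /eqP.
by split; rewrite mulrAC ?e1 ?e2 mulfK.
Qed.

Lemma cone2 (P : R -> R -> Prop) :
 (forall d1 d2 : R, (d1, d2) != (0, 0) -> exists x y, P x y /\ d1 * x + d2 * y < 0) ->
 forall w1 w2 : R, exists x y x' y' c c', P x y /\ P x' y' /\ 0 <= c /\ 0 <= c' /\
   c * x + c' * x' = w1 /\ c * y + c' * y' = w2.
Proof.
move=> H w1 w2.
have [x0 [y0 [P0 _]]] : exists x y, P x y /\ 1 * x + 0 * y < 0.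
  by apply: H; rewrite xpair_eqE oner_eq0.
have [/andP[/eqP-> /eqP->]|wn0] := boolP ((w1 == 0) && (w2 == 0)).
  by exists x0, y0, x0, y0, 0, 0; rewrite !mul0r addr0 lexx.
apply: contrapT => NC.
pose cr := fun x y => w1 * y - w2 * x.
pose dt := fun x y => w1 * x + w2 * y.
have Npos : 0 < w1^+2 + w2^+2.
  rewrite lt_neqAle addr_ge0 ?sqr_ge0 // andbT eq_sym paddr_eq0 ?sqr_ge0 //.
  by rewrite !sqrf_eq0.
have F1 : forall x y, P x y -> cr x y = 0 -> dt x y <= 0.
  move=> x y Pxy hc; rewrite leNgt; apply/negP => hd.
  apply: NC; have [e1 e2] := line_hit hc (negbT (gt_eqF hd)).
  exists x, y, x, y, ((w1^+2 + w2^+2) / dt x y), 0.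
  rewrite !mul0r !addr0 e1 e2; do !split => //.
  by rewrite divr_ge0 // ltW.
have F2 : forall a1 a2 b1 b2, P a1 a2 -> P b1 b2 -> 0 < cr a1 a2 -> cr b1 b2 < 0 ->
   cr a1 a2 * dt b1 b2 - cr b1 b2 * dt a1 a2 <= 0.
  move=> a1 a2 b1 b2 Pa Pb ha hb; rewrite leNgt; apply/negP => hd; apply: NC.
  pose al := cr a1 a2; pose be := - cr b1 b2.
  have hc : w1 * (al * b2 + be * a2) - w2 * (al * b1 + be * a1) = 0.
    by rewrite /al /be /cr; ring.
  have hq : w1 * (al * b1 + be * a1) + w2 * (al * b2 + be * a2)
     = cr a1 a2 * dt b1 b2 - cr b1 b2 * dt a1 a2.
    by rewrite /al /be /cr /dt; ring.
  have hne : w1 * (al * b1 + be * a1) + w2 * (al * b2 + be * a2) != 0.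
    by rewrite hq; exact: (negbT (gt_eqF hd)).
  have [e1 e2] := line_hit hc hne.
  move: e1 e2; rewrite hq => e1 e2.
  exists a1, a2, b1, b2,
    ((w1^+2 + w2^+2) / (cr a1 a2 * dt b1 b2 - cr b1 b2 * dt a1 a2) * be),
    ((w1^+2 + w2^+2) / (cr a1 a2 * dt b1 b2 - cr b1 b2 * dt a1 a2) * al).
  have hN : 0 <= (w1^+2 + w2^+2) / (cr a1 a2 * dt b1 b2 - cr b1 b2 * dt a1 a2).
    by rewrite divr_ge0 // ltW.
  do !split => //.
  - by rewrite mulr_ge0 // /be oppr_ge0 ltW.
  - by rewrite mulr_ge0 // ltW.
  - by apply: etrans e1; rewrite /al /be; ring.
  - by apply: etrans e2; rewrite /al /be; ring.
have [[a1 [a2 [Pa ha]]]|nA] := pselect (exists a1 a2, P a1 a2 /\ 0 < cr a1 a2); last first.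
  have hne : (w2, - w1) != (0, 0) by rewrite xpair_eqE oppr_eq0 andbC.
  have [x [y [Pxy hxy]]] := H w2 (- w1) hne.
  by apply: nA; exists x, y; split => //; rewrite /cr; lra.
have [[b1 [b2 [Pb hb]]]|nB] := pselect (exists b1 b2, P b1 b2 /\ cr b1 b2 < 0); last first.
  have hne : (- w2, w1) != (0, 0) by rewrite xpair_eqE oppr_eq0 andbC.
  have [x [y [Pxy hxy]]] := H (- w2) w1 hne.
  by apply: nB; exists x, y; split => //; rewrite /cr; lra.
pose E := [set r | exists x y, P x y /\ 0 < cr x y /\ r = dt x y / cr x y].
have ubE : forall x y, P x y -> cr x y < 0 -> ubound E (dt x y / cr x y).
  move=> x y Pxy hxy r [u [v [Puv [huv ->]]]].
  rewrite ler_pdivrMr // mulrAC ler_ndivlMr //.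
  move: (F2 _ _ _ _ Puv Pxy huv hxy).
  by rewrite [cr u v * _]mulrC [cr x y * _]mulrC subr_le0.
pose m := sup E.
have hm : ubound E m.
  by apply: ub_le_sup; exists (dt b1 b2 / cr b1 b2); exact: ubE.
have hm2 : forall x y, P x y -> cr x y < 0 -> m <= dt x y / cr x y.
  move=> x y Pxy hxy; apply: ge_sup; last exact: ubE.
  by exists (dt a1 a2 / cr a1 a2), a1, a2.
have dn0 : (- (m * w2) - w1, m * w1 - w2) != (0, 0).
  rewrite xpair_eqE; apply/negP => /andP[/eqP h1 /eqP h2].
  move/eqP: h1; rewrite subr_eq0 => /eqP h1.
  move/eqP: h2; rewrite subr_eq0 => /eqP h2.
  have : w2 * (1 + m^+2) = w2 - m * (- (m * w2)) by ring.
  rewrite h1 h2 subrr => /eqP; rewrite mulf_eq0 => /orP[w20|].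
    move: wn0; rewrite w20 andbT; move/eqP: w20 => w20.
    by rewrite -h1 w20 mulr0 oppr0 eqxx.
  by apply/negP; rewrite gt_eqF //; nra.
have [x [y [Pxy hxy]]] := H _ _ dn0.
have ee : (- (m * w2) - w1) * x + (m * w1 - w2) * y = m * cr x y - dt x y.
  by rewrite /cr /dt; ring.
move: hxy; rewrite ee subr_lt0; apply/negP; rewrite -leNgt.
case: (ltgtP (cr x y) 0) => hc.
- by move: (hm2 _ _ Pxy hc); rewrite ler_ndivlMr // mulrC.
- by move: (hm (dt x y / cr x y) (ex_intro _ x (ex_intro _ y (conj Pxy (conj hc erefl)))));
    rewrite ler_pdivrMr // mulrC.
- by rewrite hc mulr0; exact: F1.
Qed.

Lemma CS (n : nat) (f g : 'I_n -> R) :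
  (\sum_i f i * g i) ^+ 2 <= (\sum_i f i ^+ 2) * (\sum_i g i ^+ 2).
Proof.
set X := \sum_i f i ^+ 2; set Y := \sum_i g i ^+ 2; set S := \sum_i f i * g i.
have X0 : 0 <= X by apply: sumr_ge0 => i _; exact: sqr_ge0.
have [X00|Xp] := eqVneq X 0.
  have f0 : forall i, f i = 0.
    move=> i; apply/eqP; rewrite -sqrf_eq0; apply/eqP.
    exact: (@psumr_eq0P _ _ _ _ (fun j _ => sqr_ge0 (f j)) X00 i isT).
  have -> : S = 0 by rewrite /S big1 // => i _; rewrite f0 mul0r.
  by rewrite expr0n /= mulr_ge0 // sumr_ge0 // => i _; exact: sqr_ge0.
have Xpos : 0 < X by rewrite lt_neqAle eq_sym Xp X0.
have key : 0 <= \sum_i (X * g i - S * f i) ^+ 2 by apply: sumr_ge0 => i _; exact: sqr_ge0.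
have ek : \sum_i (X * g i - S * f i) ^+ 2 = X * (X * Y - S ^+ 2).
  have -> : \sum_i (X * g i - S * f i) ^+ 2 =
     \sum_i (X ^+ 2 * g i ^+ 2 - (2 * X * S) * (f i * g i) + S ^+ 2 * f i ^+ 2).
    by apply: eq_bigr => i _; ring.
  rewrite !big_split /= sumrN -!mulr_sumr -/X -/Y -/S; ring.
by move: key; rewrite ek pmulr_rge0 // subr_ge0.
Qed.

Lemma sq_pos (n : nat) (v : 'rV[R]_n) : v != 0 -> 0 < (v *m v^T) 0 0.
Proof.
move=> vn0.
have -> : (v *m v^T) 0 0 = \sum_j v 0 j ^+ 2.
  by rewrite !mxE; apply: eq_bigr => j _; rewrite mxE expr2.
rewrite lt_neqAle sumr_ge0 ?andbT; last by move=> j _; exact: sqr_ge0.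
rewrite eq_sym; apply/negP => /eqP h; move/negP: vn0; apply; apply/eqP.
apply/matrixP => i j; rewrite (ord1 i) mxE; apply/eqP; rewrite -sqrf_eq0; apply/eqP.
exact: (@psumr_eq0P _ _ _ _ (fun k _ => sqr_ge0 (v 0 k)) h j isT).
Qed.

Lemma neg_dir (n : nat) (A : 'M[R]_n) :
  strictly_hyperbolic A -> exists v : 'rV[R]_n, (v *m A *m v^T) 0 0 < 0.
Proof.
move=> [lmax [lmin [[elmax hmax] [[elmin hmin] [M [M0 [h1 h2]]]]]]].
have lneg : lmin < 0.
  rewrite ltNge; apply/negP => l0.
  have hl := hmax _ elmin.
  have : - lmax / lmin <= 0.
    have [->|ln0] := eqVneq lmin 0; first by rewrite invr0 mulr0.
    have lp : 0 < lmin by rewrite lt_neqAle eq_sym ln0 l0.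
    by rewrite pmulr_lle0 ?invr_gt0 // oppr_le0 (le_trans l0 hl).
  have : 0 < M^-1 by rewrite invr_gt0.
  move: h1; lra.
have [v hv vn0] := eigenvalueP elmin.
exists v; rewrite hv -scalemxAl mxE nmulr_rlt0 //.
exact: sq_pos.
Qed.
End Cone.

Lemma tr_rank1 (R : realType) (n : nat) (F : 'M[R]_n) (v : 'rV[R]_n) :
  \tr (F *m (v^T *m v)) = (v *m F *m v^T) 0 0.
Proof.
by rewrite mulmxA mxtrace_mulC mulmxA /mxtrace big_ord1.
Qed.

Lemma qr1 (R : realType) (n : nat) (v : 'rV[R]_n) (xi : 'cV[R]_n) :
  (xi^T *m (v^T *m v) *m xi) 0 0 = ((v *m xi) 0 0) ^+ 2.
Proof. by rewrite mulmxA -trmx_mul -mulmxA mxE big_ord1 mxE expr2. Qed.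

Lemma sqnormE (R : realType) (n : nat) (xi : 'cV[R]_n) :
  sqnorm xi = (xi^T *m xi) 0 0.
Proof. by rewrite mxE; apply: eq_bigr => j _; rewrite mxE expr2. Qed.

Lemma sqv_ge0 (R : realType) (n : nat) (v : 'rV[R]_n) : 0 <= (v *m v^T) 0 0.
Proof. by rewrite mxE sumr_ge0 // => j _; rewrite mxE -expr2 sqr_ge0. Qed.

Lemma CSv (R : realType) (n : nat) (v : 'rV[R]_n) (xi : 'cV[R]_n) :
  ((v *m xi) 0 0) ^+ 2 <= (v *m v^T) 0 0 * sqnorm xi.
Proof.
have -> : (v *m v^T) 0 0 = \sum_j v 0 j ^+ 2.
  by rewrite !mxE; apply: eq_bigr => j _; rewrite mxE expr2.
rewrite mxE /sqnorm; exact: (CS (fun j => v 0 j) (fun j => xi j 0)).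
Qed.

Unset Implicit Arguments.
Local Close Scope classical_set_scope.

Theorem lemma5p2 (R : realType) (n : nat) (F1 F2 : 'M[R]_n) :
  sym_mx F1 -> sym_mx F2 ->
  (forall a b : R, (a, b) != (0, 0) -> strictly_hyperbolic (a *: F1 + b *: F2)) ->
  exists C : R, 0 < C /\
    exists Q : 'M[R]_n, in_K C Q /\ \tr (F1 *m Q) = 0 /\ \tr (F2 *m Q) = 0.
Proof.
move=> _ _ H.
pose P := fun x y : R => exists v : 'rV[R]_n,
  (v *m F1 *m v^T) 0 0 = x /\ (v *m F2 *m v^T) 0 0 = y.
have HP : forall d1 d2 : R, (d1, d2) != (0, 0) ->
    exists x y, P x y /\ d1 * x + d2 * y < 0.
  move=> d1 d2 hd; have [v hv] := neg_dir (H _ _ hd).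
  exists ((v *m F1 *m v^T) 0 0), ((v *m F2 *m v^T) 0 0); split; first by exists v.
  by move: hv; rewrite mulmxDr mulmxDl -!scalemxAr -!scalemxAl !mxE.
have [x [y [x' [y' [c [c' [[va [ha1 ha2]] [[vb [hb1 hb2]] [c0 [c'0 [e1 e2]]]]]]]]]]]
  := @cone2 R P HP (- \tr F1) (- \tr F2).
pose Q := 1%:M + c *: (va^T *m va) + c' *: (vb^T *m vb).
have trQ : forall F, \tr (F *m Q) = \tr F + c * (va *m F *m va^T) 0 0
                                         + c' * (vb *m F *m vb^T) 0 0.
  move=> F; rewrite /Q !mulmxDr !mxtraceD mulmx1 -!scalemxAr !mxtraceZ.
  by rewrite !tr_rank1.

exists (1 + c * (va *m va^T) 0 0 + c' * (vb *m vb^T) 0 0).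
have sa := sqv_ge0 va; have sb := sqv_ge0 vb.
have C1 : 1 <= 1 + c * (va *m va^T) 0 0 + c' * (vb *m vb^T) 0 0.
  by rewrite -addrA lerDl addr_ge0 // mulr_ge0.
split; first exact: lt_le_trans C1.
exists Q; split; last first.
  by rewrite !trQ ha1 hb1 ha2 hb2 -addrA e1 -addrA e2 !subrr.
split.
  rewrite /sym_mx /Q !linearD /= !linearZ /= trmx1 !trmx_mul !trmxK //.
move=> xi.
have eQ : xi^T *m Q *m xi = xi^T *m xi + c *: (xi^T *m (va^T *m va) *m xi)
                           + c' *: (xi^T *m (vb^T *m vb) *m xi).
  by rewrite /Q !mulmxDr !mulmxDl mulmx1 -!scalemxAr -!scalemxAl.
have qE : qform Q xi = sqnorm xi + c * ((va *m xi) 0 0) ^+ 2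
                         + c' * ((vb *m xi) 0 0) ^+ 2.
  rewrite /qform eQ sqnormE -!qr1.
  set t0 := xi^T *m xi; set t1 := xi^T *m (va^T *m va) *m xi.
  set t2 := xi^T *m (vb^T *m vb) *m xi.
  by rewrite !mxE.
rewrite qE.
have s0 : 0 <= sqnorm xi by rewrite /sqnorm sumr_ge0 // => j _; exact: sqr_ge0.
have ca := CSv va xi; have cb := CSv vb xi.
have q1 : 0 <= ((va *m xi) 0 0) ^+ 2 := sqr_ge0 _.
have q2 : 0 <= ((vb *m xi) 0 0) ^+ 2 := sqr_ge0 _.
set C := 1 + c * (va *m va^T) 0 0 + c' * (vb *m vb^T) 0 0.
split.
  have Cp : 0 < C by exact: lt_le_trans C1.
  have Ci : C^-1 <= 1 by rewrite invf_le1.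
  have g1 : 0 <= c * ((va *m xi) 0 0) ^+ 2 by exact: mulr_ge0.
  have g2 : 0 <= c' * ((vb *m xi) 0 0) ^+ 2 by exact: mulr_ge0.
  have g3 : C^-1 * sqnorm xi <= sqnorm xi.
    by rewrite ler_piMl // invr_ge0 ltW.
  lra.
have h1 : c * ((va *m xi) 0 0) ^+ 2 <= c * ((va *m va^T) 0 0 * sqnorm xi)
  by exact: ler_wpM2l.
have h2 : c' * ((vb *m xi) 0 0) ^+ 2 <= c' * ((vb *m vb^T) 0 0 * sqnorm xi)
  by exact: ler_wpM2l.
have -> : C * sqnorm xi = sqnorm xi + c * ((va *m va^T) 0 0 * sqnorm xi)
                         + c' * ((vb *m vb^T) 0 0 * sqnorm xi) by rewrite /C; ring.
lra.
Qed.
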